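(* Let $q$ be an odd prime power and $d\ge 2$. Let $V$ be a $(2d+1)$-dimensional vector space over $\mathbb{F}_q$ with basis $z,e_0,f_0,x,y,e_1,f_1,\dots,e_{d-2},f_{d-2}$ and nondegenerate symmetric bilinear form $\beta$ with $V=\langle z\rangle\perp\langle e_0,f_0\rangle\perp\langle x,y\rangle\perp\langle e_1,f_1\rangle\perp\cdots\perp\langle e_{d-2},f_{d-2}\rangle$, $\beta(z,z)=1$, $\beta(e_i,f_i)=1$, $\beta(e_i,e_i)=\beta(f_i,f_i)=0$, and $\langle x,y\rangle$ anisotropic; let $\kappa(v)=\beta(v,v)/2$ and $U=\langle x,y,e_1,f_1,\dots,e_{d-2},f_{d-2}\rangle$. Let $M$ be a maximal (a totally singular $d$-dimensional subspace of $V$). Then $M$ has a basis $b_1,\dots,b_d$ of one of the following forms, where $u_1,\dots,u_d\in U$ and $\lambda,\mu\in\mathbb{F}_q$: (i) $b_1=z+u_1$, $b_2=e_0+u_2$, $b_3=f_0+u_3$, $b_i=u_i$ for $4\le i\le d$; (ii) $b_1=z+\lambda f_0+u_1$, $b_2=e_0+\mu f_0+u_2$, $b_i=u_i$ for $3\le i\le d$; (iii) $b_1=z+\lambda e_0+u_1$, $b_2=f_0+u_2$, $b_i=u_i$ for $3\le i\le d$.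
   Context: A subspace is totally singular if $\kappa$ vanishes on all its vectors. *)

(* Defs.v *)
From HB Require Import structures.
From mathcomp Require Import all_boot all_order all_algebra.
Set Implicit Arguments. Unset Strict Implicit. Unset Printing Implicit Defensive.
Import GRing.Theory.
Local Open Scope ring_scope.

Section Defs.
Variables (F : fieldType) (V : vectType F).

Definition qf_hyp_seq (e f : nat -> V) (d : nat) : seq V :=
  flatten [seq [:: e i; f i] | i <- iota 1 (d - 2)].

Definition qf_full_basis (z x y : V) (e f : nat -> V) (d : nat) : seq V :=
  [:: z; e 0%N; f 0%N; x; y] ++ qf_hyp_seq e f d.

Definition qf_Usp (x y : V) (e f : nat -> V) (d : nat) : {vspace V} :=
  <<[:: x; y] ++ qf_hyp_seq e f d>>%VS.

Definition qf_blocks (z x y : V) (e f : nat -> V) (d : nat) : seq {vspace V} :=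
  [:: <[z]>%VS; <<[:: e 0%N; f 0%N]>>%VS; <<[:: x; y]>>%VS] ++
  [seq <<[:: e i; f i]>>%VS | i <- iota 1 (d - 2)].

Definition qf_orth (beta : V -> V -> F) (A B : {vspace V}) : Prop :=
  forall a b, a \in A -> b \in B -> beta a b = 0.

Definition qf_bilin_form (beta : V -> V -> F) : Prop :=
  (forall a u v w, beta (a *: u + v) w = a * beta u w + beta v w) /\
  (forall a u v w, beta w (a *: u + v) = a * beta w u + beta w v).

Definition qf_symm_form (beta : V -> V -> F) : Prop :=
  forall u v, beta u v = beta v u.

Definition qf_nondegenerate (beta : V -> V -> F) : Prop :=
  forall v, (forall w, beta v w = 0) -> v = 0.

Definition qf_anisotropic (beta : V -> V -> F) (W : {vspace V}) : Prop :=
  forall v, v \in W -> v != 0 -> beta v v != 0.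

Definition qf_kappa (beta : V -> V -> F) (v : V) : F := beta v v / 2%:R.

Definition qf_totally_singular (beta : V -> V -> F) (W : {vspace V}) : Prop :=
  forall v, v \in W -> qf_kappa beta v = 0.

End Defs.

(* Main.v *)
Require Import Defs.
From HB Require Import structures.
From mathcomp Require Import all_boot all_order all_algebra.
From mathcomp Require Import fingroup pgroup abelian.
From mathcomp Require Import zify.
Set Implicit Arguments. Unset Strict Implicit.
Import GRing.Theory.
Local Open Scope ring_scope.

Section Aux.
Variables (F : fieldType) (V : vectType F) (beta : V -> V -> F).
Hypothesis Hbil : qf_bilin_form beta.
Hypothesis Hsym : qf_symm_form beta.

Lemma beta0l w : beta 0 w = 0.
Proof.
have := Hbil.1 1 0 0 w; rewrite scale1r addr0 mul1r => H.
by apply: (@addrI _ (beta 0 w)); rewrite addr0 -H.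
Qed.
Lemma beta0r w : beta w 0 = 0. Proof. by rewrite Hsym beta0l. Qed.
Lemma betaDl u v w : beta (u + v) w = beta u w + beta v w.
Proof. by have := Hbil.1 1 u v w; rewrite scale1r mul1r. Qed.
Lemma betaZl a u w : beta (a *: u) w = a * beta u w.
Proof. by have := Hbil.1 a u 0 w; rewrite addr0 beta0l addr0. Qed.
Lemma betaNl u w : beta (- u) w = - beta u w.
Proof. by rewrite -scaleN1r betaZl mulN1r. Qed.
Lemma betaBl u v w : beta (u - v) w = beta u w - beta v w.
Proof. by rewrite betaDl betaNl. Qed.
Lemma betaDr u v w : beta w (u + v) = beta w u + beta w v.
Proof. by rewrite !(Hsym w) betaDl. Qed.
Lemma betaZr a u w : beta w (a *: u) = a * beta w u.
Proof. by rewrite !(Hsym w) betaZl. Qed.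
Lemma betaBr u v w : beta w (u - v) = beta w u - beta w v.
Proof. by rewrite !(Hsym w) betaBl. Qed.

Lemma beta_suml n (G : 'I_n -> V) w :
  beta (\sum_(i < n) G i) w = \sum_(i < n) beta (G i) w.
Proof.
elim/big_rec2: _ => [|i a b _ <-]; first exact: beta0l.
by rewrite betaDl.
Qed.

Lemma orth_span (s : seq V) w : (forall g, g \in s -> beta g w = 0) ->
  forall v, v \in <<s>>%VS -> beta v w = 0.
Proof.
move=> H v /(@coord_span _ _ _ (in_tuple s)) ->.
rewrite beta_suml big1 // => i _.
by rewrite betaZl H ?mulr0 // mem_nth.
Qed.

Lemma hom_span (h1 h2 : 'End(V)) (s : seq V) :
  (forall g, g \in s -> h1 g = h2 g) -> forall v, v \in <<s>>%VS -> h1 v = h2 v.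
Proof.
move=> H v /(@coord_span _ _ _ (in_tuple s)) ->.
rewrite !linear_sum; apply: eq_bigr => i _.
by rewrite !linearZ /= H // mem_nth.
Qed.

Lemma bhom_lin (w t : V) : linear (fun v => beta v w *: t).
Proof. by move=> a u v; rewrite /= Hbil.1 scalerDl scalerA. Qed.

Definition bhomL (w t : V) : {linear V -> V} :=
  HB.pack (fun v => beta v w *: t) (GRing.isLinear.Build _ _ _ _ _ (bhom_lin w t)).
Definition bhom (w t : V) : 'End(V) := linfun (bhomL w t).

Lemma bhomE w t v : bhom w t v = beta v w *: t.
Proof. by rewrite /bhom lfunE. Qed.


Definition Xsp (A : {vspace V}) (es fs : nat -> V) k :=
  (A + <<flatten [seq [:: es i; fs i] | i <- iota 0 k]>>)%VS.

Lemma XspS A es fs k :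
  Xsp A es fs k.+1 = (Xsp A es fs k + <<[:: es k; fs k]>>)%VS.
Proof.
by rewrite /Xsp -addn1 iotaD map_cat flatten_cat span_cat addvA.
Qed.

Lemma ts_bound (A : {vspace V}) (es fs : nat -> V) k (T : {vspace V}) :
 (forall a, a \in A -> beta a a = 0 -> a = 0) ->
 (forall i, (i < k)%N -> [/\ beta (es i) (fs i) = 1, beta (es i) (es i) = 0
                             & beta (fs i) (fs i) = 0]) ->
 (forall i j, (i < k)%N -> (j < k)%N -> i != j ->
    [/\ beta (es i) (es j) = 0, beta (es i) (fs j) = 0,
        beta (fs i) (es j) = 0 & beta (fs i) (fs j) = 0]) ->
 (forall a i, a \in A -> (i < k)%N -> beta a (es i) = 0 /\ beta a (fs i) = 0) ->
 (T <= Xsp A es fs k)%VS ->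
 (forall v w, v \in T -> w \in T -> beta v w = 0) -> (\dim T <= k)%N.
Proof.
move=> HA; elim: k T => [|k IH] T Hes Ho HAo HT Hts.
  rewrite leqn0 dimv_eq0 -subv0; apply/subvP => v Tv.
  have: v \in A by move/subvP: HT => /(_ v Tv); rewrite /Xsp span_nil addv0.
  by move=> Av; rewrite (HA v Av (Hts v v Tv Tv)) mem0v.
set e := es k; set f := fs k.
have [Hef Hee Hff] : [/\ beta e f = 1, beta e e = 0 & beta f f = 0] := Hes k (ltnSn k).
have Hfe : beta f e = 1 by rewrite Hsym.
have HXk : forall x, x \in Xsp A es fs k -> beta x e = 0 /\ beta x f = 0.
  move=> x /memv_addP [a Aa [s Ss ->]].
  have [Hae Haf] := HAo a k Aa (ltnSn k).
  suff [H1 H2] : beta s e = 0 /\ beta s f = 0 by rewrite !betaDl Hae Haf H1 H2 addr0.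
  split; apply: (orth_span _ Ss) => g /flatten_mapP [i]; rewrite mem_iota add0n => /andP [_ ik];
    rewrite !inE => /orP [] /eqP ->;
    have [H1 H2 H3 H4] := Ho i k (ltnW ik) (ltnSn k) (negbT (ltn_eqF ik));
    by [].
have e0 : e != 0.
  by apply/eqP => E; move: Hef; rewrite E beta0l => /eqP; rewrite eq_sym oner_eq0.
pose g : 'End(V) := (\1 - bhom f e - bhom e f)%VF.
have gE v : g v = v - beta v f *: e - beta v e *: f.
  by rewrite /g !add_lfunE !opp_lfunE id_lfunE !bhomE.
have kerE v : (v \in lker (bhom e e)) = (beta v e == 0).
  by rewrite memv_ker bhomE scaler_eq0 (negbTE e0) orbF.
set T1 := (T :&: lker (bhom e e))%VS.
have dim1 : (\dim T <= \dim T1 + 1)%N.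
  rewrite -(limg_ker_dim (bhom e e) T) leq_add2l.
  apply: leq_trans (_ : \dim <[e]> <= 1)%N; last by rewrite dim_vline leq_b1.
  apply: dimvS; apply/subvP => w /memv_imgP [v _ ->].
  by rewrite bhomE memvZ // memv_line.
have T1P v : v \in T1 -> v \in T /\ beta v e = 0.
  by rewrite memv_cap kerE => /andP [-> /eqP].
set T2 := (g @: T1)%VS.
have dim2 := limg_ker_dim g T1.
have dimK : (\dim (T1 :&: lker g) + \dim T <= \dim T1 + 1)%N.
  have sub : (T1 :&: lker g <= <[e]>)%VS.
    apply/subvP => v; rewrite memv_cap memv_ker gE => /andP [/T1P [_ ->]].
    rewrite scale0r subr0 subr_eq0 => /eqP ->.
    by rewrite memvZ // memv_line.
  have [eT | eT] := boolP (e \in T).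
    have E : T1 = T.
      apply/capv_idPl/subvP => v Tv; rewrite kerE; apply/eqP; exact: Hts.
    have := dimvS sub; rewrite dim_vline e0 /= => H.
    by rewrite E addnC leq_add2l -E.
  suff -> : (T1 :&: lker g)%VS = 0%VS by rewrite dimv0 add0n.
  apply/eqP; rewrite -subv0; apply/subvP => v.
  rewrite memv_cap memv_ker gE => /andP [/T1P [Tv ->]].
  rewrite scale0r subr0 subr_eq0 => /eqP vE.
  have [c0 | cn0] := eqVneq (beta v f) 0.
    by rewrite vE c0 scale0r mem0v.
  case/negP: eT.
  have -> : e = (beta v f)^-1 *: v by rewrite {2}vE scalerA mulVf // scale1r.
  by rewrite memvZ.
have : (\dim T2 <= k)%N.
  apply: IH.
  - by move=> i ik; apply: Hes; apply: ltnW.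
  - by move=> i j ik jk; apply: Ho; apply: ltnW.
  - by move=> a i Aa ik; apply: HAo => //; apply: ltnW.
  - apply/subvP => w /memv_imgP [v /T1P [Tv _] ->].
    move/subvP: HT => /(_ v Tv); rewrite XspS => /memv_addP [x Xx [s Ss ->]].
    rewrite linearD /=.
    have -> : g s = 0.
      rewrite -(zero_lfunE _ s); apply: (hom_span _ Ss) => h.
      rewrite !inE zero_lfunE gE => /orP [] /eqP ->.
        by rewrite Hee Hef scale0r scale1r subr0 subrr.
      by rewrite Hff Hfe scale0r scale1r subr0 subrr.
    have [H1 H2] := HXk x Xx.
    by rewrite gE H1 H2 !scale0r !subr0 addr0.
  - move=> w1 w2 /memv_imgP [v1 /T1P [T1v1 H1] ->] /memv_imgP [v2 /T1P [T2v2 H2] ->].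
    rewrite !gE H1 H2 !scale0r !subr0 betaBl !betaBr !betaZl !betaZr.
    by rewrite Hts // H1 Hee (Hsym e) H2 !mulr0 !subr0.
move=> HH; rewrite /T2 in HH; lia.
Qed.


Lemma dual_free (X Y : seq V) : size X = size Y ->
  (forall i j, (i < size X)%N -> (j < size X)%N -> beta X`_i Y`_j = (i == j)%:R) ->
  free X.
Proof.
move=> sXY H; apply/(@freeP _ _ _ (in_tuple X)) => k Hk j.
have := congr1 (fun v => beta v Y`_j) Hk; rewrite /= beta0l beta_suml.
rewrite (bigD1 j) //= big1 => [|i /negbTE nij]; last first.
  move/negbT: nij; rewrite -val_eqE => /negbTE nij.
  by rewrite betaZl H ?ltn_ord // nij mulr0.
by rewrite betaZl H ?eqxx ?mulr1 ?addr0 // ltn_ord.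
Qed.

End Aux.

Lemma assemble (F : fieldType) (V : vectType F) (p : 'End(V)) (M : {vspace V}) (bs : seq V) :
  all (mem M) bs -> free (map p bs) -> size bs = \dim (p @: M)%VS ->
  basis_of M (bs ++ vbasis (M :&: lker p)).
Proof.
move=> bsM frb szb.
have sbM : (<<bs>> <= M)%VS by apply/span_subvP => b /(allP bsM).
have PE : (p @: <<bs>> = p @: M)%VS.
  apply/eqP; rewrite eqEdim limgS //= limg_span.
  by move/eqP: frb => ->; rewrite size_map szb.
rewrite basisEdim size_cat size_tuple szb addnC limg_ker_dim leqnn andbT.
apply/subvP => v Mv.
have : p v \in (p @: <<bs>>)%VS by rewrite PE memv_img.
case/memv_imgP => w Sw pw.
have -> : v = w + (v - w) by rewrite addrC subrK.
rewrite span_cat; apply: memv_add => //.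
rewrite (span_basis (vbasisP _)) memv_cap memv_ker linearB /= pw subrr eqxx andbT.
by rewrite rpredB // (subvP sbM).
Qed.

Ltac prune := repeat match goal with
  | H : ?T |- _ => lazymatch type of T with
      | Prop => lazymatch T with
          | is_true _ => fail | @eq nat _ _ => fail | @eq bool _ _ => fail
          | _ => clear H end
      end
  end.

Lemma two_neq0 (F : finFieldType) : odd #|F| -> (2%:R : F) != 0.
Proof.
move=> oddF; apply/negP => H2.
have pc : (2 \in [pchar F])%N by rewrite inE H2.
have /abelem_pgroup := fin_ring_pchar_abelem pc.
rewrite /pgroup cardsT => /p_natP [k Hk].
move: oddF; rewrite Hk; case: k Hk => [|k] Hk.
  by have := card_finNzRing_gt1 F; rewrite Hk.
by rewrite expnS oddM.
Qed.

Lemma map_nth_iota1 (T : Type) (x0 : T) (L : seq T) :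
  [seq nth x0 L i.-1 | i <- iota 1 (size L)] = L.
Proof.
rewrite (iotaDl 1 0) -map_comp -[RHS](mkseq_nth x0) /mkseq.
by apply: eq_map => i.
Qed.

Lemma aux2 j n : (2 <= j < n)%N -> [/\ (j < n)%N, (0 < n)%N, (1 < n)%N, j != 0%N & j != 1%N].
Proof. by move=> H; split; lia. Qed.

Lemma aux3 n i : (n < i)%N -> (i.-1 < n)%N = false.
Proof. move=> H; apply/negbTE; rewrite -leqNgt; lia. Qed.
Lemma aux4 a b i d : (a + b = d)%N -> (a < i <= d)%N -> (i.-1 - a < b)%N.
Proof. lia. Qed.
Lemma aux5 n i : (0 < i)%N -> (i <= n)%N -> (i.-1 < n)%N.
Proof. lia. Qed.
Lemma aux6 a b d : (a + b = d)%N -> (a <= d - 2)%N -> (2 <= d)%N -> (2 <= b)%N.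
Proof. lia. Qed.

Lemma aux7 n : (2 <= n)%N -> (n <= 3)%N -> n = 3%N \/ n = 2%N.
Proof. lia. Qed.
Lemma aux8 a b d : (a + b = d)%N -> b = 3%N -> (3 <= d)%N.
Proof. lia. Qed.

Unset Implicit Arguments. Set Strict Implicit.

Theorem lemma3p8 (F : finFieldType) (V : vectType F) (beta : V -> V -> F)
  (d : nat) (z x y : V) (e f : nat -> V) (M : {vspace V}) :
  odd #|F| -> (2 <= d)%N ->
  qf_bilin_form beta -> qf_symm_form beta -> qf_nondegenerate beta ->
  basis_of fullv (qf_full_basis z x y e f d) ->
  (forall i j, (i < size (qf_blocks z x y e f d))%N ->
     (j < size (qf_blocks z x y e f d))%N -> i != j ->
     qf_orth beta (nth 0%VS (qf_blocks z x y e f d) i) (nth 0%VS (qf_blocks z x y e f d) j)) ->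
  beta z z = 1 ->
  (forall i, (i <= d - 2)%N ->
     [/\ beta (e i) (f i) = 1, beta (e i) (e i) = 0 & beta (f i) (f i) = 0]) ->
  qf_anisotropic beta <<[:: x; y]>>%VS ->
  qf_totally_singular beta M -> \dim M = d ->
  exists (b u : nat -> V),
    basis_of M [seq b i | i <- iota 1 d] /\
    (forall i, (1 <= i <= d)%N -> u i \in qf_Usp x y e f d) /\
    [\/ [/\ (3 <= d)%N, b 1%N = z + u 1%N, b 2%N = e 0%N + u 2%N,
            b 3%N = f 0%N + u 3%N &
            forall i, (4 <= i <= d)%N -> b i = u i],
        exists lam mu : F,
          [/\ b 1%N = z + lam *: f 0%N + u 1%N,
              b 2%N = e 0%N + mu *: f 0%N + u 2%N &
              forall i, (3 <= i <= d)%N -> b i = u i]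
      | exists lam : F,
          [/\ b 1%N = z + lam *: e 0%N + u 1%N,
              b 2%N = f 0%N + u 2%N &
              forall i, (3 <= i <= d)%N -> b i = u i]].
Proof.
move=> oddF d2 Hbil Hsym _ Hbasis Horth Hzz Hef Hanis Hts Hdim.
have two := two_neq0 oddF.
have bDl := betaDl Hbil; have bDr := betaDr Hbil Hsym.
have bZl := betaZl Hbil; have bZr := betaZr Hbil Hsym.
have bBl := betaBl Hbil; have bBr := betaBr Hbil Hsym.
have b0l := beta0l Hbil; have b0r := beta0r Hbil Hsym.
have Hts' : forall v w, v \in M -> w \in M -> beta v w = 0.
  have Hvv : forall v, v \in M -> beta v v = 0.
    move=> v Mv; have /eqP := Hts v Mv; rewrite /qf_kappa mulf_eq0 invr_eq0 (negbTE two) orbF.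
    by move/eqP.
  move=> v w Mv Mw.
  have := Hvv _ (rpredD Mv Mw).
  rewrite bDl !bDr Hvv // Hvv // add0r addr0 (Hsym w v) => /eqP.
  by rewrite -mulr2n -mulr_natl mulf_eq0 (negbTE two) => /eqP.
set B := qf_blocks z x y e f d.
have szB : size B = (d - 2).+3 by rewrite /B /qf_blocks size_cat size_map size_iota.
have Hb : forall i j a b, (i < (d - 2).+3)%N -> (j < (d - 2).+3)%N -> i != j ->
    a \in nth 0%VS B i -> b \in nth 0%VS B j -> beta a b = 0.
  by move=> i j a b ib jb ij; apply: Horth; rewrite ?szB.
pose blk i := if i == 0%N then 1%N else i.+2.
have blkB : forall i, (i <= d - 2)%N -> nth 0%VS B (blk i) = <<[:: e i; f i]>>%VS.
  case=> [|i] // id2; rewrite /blk /= /B /qf_blocks /=.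
  rewrite (nth_map 0%N) ?size_iota // nth_iota //; (prune; lia).
have blk_lt : forall i, (i <= d - 2)%N -> (blk i < (d - 2).+3)%N.
  by case=> [|i] /=; rewrite /blk /=; (prune; lia).
have mem_e : forall i, e i \in <<[:: e i; f i]>>%VS.
  by move=> i; apply: memv_span; rewrite !inE eqxx.
have mem_f : forall i, f i \in <<[:: e i; f i]>>%VS.
  by move=> i; apply: memv_span; rewrite !inE eqxx orbT.
have pair_orth : forall i j, (i <= d - 2)%N -> (j <= d - 2)%N -> i != j ->
   [/\ beta (e i) (e j) = 0, beta (e i) (f j) = 0,
       beta (f i) (e j) = 0 & beta (f i) (f j) = 0].
  move=> i j id jd ij.
  have bij : blk i != blk j.
    by move: ij; rewrite /blk; case: i {id} => [|i]; case: j {jd} => [|j] //=; (prune; lia).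
  by split; apply: (Hb _ _ _ _ (blk_lt i id) (blk_lt j jd) bij); rewrite blkB.
have A_orth : forall a i, a \in <<[:: x; y]>>%VS -> (i <= d - 2)%N ->
   beta a (e i) = 0 /\ beta a (f i) = 0.
  move=> a i Aa id.
  have b2 : (2 != blk i)%N by rewrite /blk; case: i {id}.
  by split; apply: (Hb _ _ _ _ _ (blk_lt i id) b2); rewrite ?blkB //; (prune; lia).
have Hanis' : forall a, a \in <<[:: x; y]>>%VS -> beta a a = 0 -> a = 0.
  move=> a Aa aa; apply/eqP; apply/negP => /negP an0.
  by have := Hanis a Aa an0; rewrite aa eqxx.
set Ugens := [:: x; y] ++ qf_hyp_seq e f d.
have Ug_blk : forall g, g \in Ugens -> exists2 j, (2 <= j < (d - 2).+3)%N & g \in nth 0%VS B j.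
  move=> g; rewrite mem_cat => /orP [gxy|].
    exists 2%N; first (prune; lia).
    by apply: memv_span.
  case/flatten_mapP => i; rewrite mem_iota => /andP [i1 id] gi.
  have bi : blk i = i.+2 by rewrite /blk; case: i i1 {id gi}.
  exists (blk i); first by rewrite bi; (prune; lia).
  by rewrite blkB; [apply: memv_span | (prune; lia)].
have z0 : z \in nth 0%VS B 0 by apply: memv_line.
have e00 : e 0%N \in nth 0%VS B 1 by apply: mem_e.
have f00 : f 0%N \in nth 0%VS B 1 by apply: mem_f.
have Uorth : forall u, u \in qf_Usp x y e f d ->
    [/\ beta u z = 0, beta u (e 0%N) = 0 & beta u (f 0%N) = 0].
  move=> u Uu; split; apply: (orth_span Hbil _ Uu) => g /Ug_blk [j /aux2 [h1 h2 h3 h4 h5] gj].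
  - exact: (Hb j 0%N _ _ h1 h2 h4 gj z0).
  - exact: (Hb j 1%N _ _ h1 h3 h5 gj e00).
  - exact: (Hb j 1%N _ _ h1 h3 h5 gj f00).
have [Hze Hzf] : beta z (e 0%N) = 0 /\ beta z (f 0%N) = 0.
  by split; apply: (Hb 0%N 1%N) => //; (prune; lia).
have [Hee0 Hff0 Hef0] : [/\ beta (e 0%N) (e 0%N) = 0, beta (f 0%N) (f 0%N) = 0
    & beta (e 0%N) (f 0%N) = 1].
  by have [] := Hef 0%N (leq0n _).
pose pi : 'End(V) := (bhom Hbil z z + bhom Hbil (f 0%N) (e 0%N) + bhom Hbil (e 0%N) (f 0%N))%R.
have piE : forall v, pi v = beta v z *: z + beta v (f 0%N) *: e 0%N + beta v (e 0%N) *: f 0%N.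
  by move=> v; rewrite /pi !add_lfunE !bhomE.
have K1 : forall u, u \in qf_Usp x y e f d -> pi u = 0.
  by move=> u /Uorth [H1 H2 H3]; rewrite piE H1 H2 H3 !scale0r !addr0.
have K2 : forall w, w \in <<[:: z; e 0%N; f 0%N]>>%VS -> pi w = w.
  move=> w Hw; rewrite -[RHS](id_lfunE w); apply: (hom_span _ Hw) => g.
  rewrite id_lfunE !inE => /orP [/eqP ->|/orP [] /eqP ->]; rewrite piE.
  - by rewrite Hzz Hzf Hze !scale0r scale1r !addr0.
  - by rewrite (Hsym _ z) Hze Hef0 Hee0 !scale0r scale1r add0r addr0.
  - by rewrite (Hsym _ z) Hzf Hff0 (Hsym _ (e 0%N)) Hef0 !scale0r scale1r !add0r.
have K3 : forall v, v - pi v \in qf_Usp x y e f d.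
  move=> v; have : v \in <<qf_full_basis z x y e f d>>%VS.
    by rewrite (span_basis Hbasis) memvf.
  rewrite (_ : qf_full_basis z x y e f d = [:: z; e 0%N; f 0%N] ++ Ugens) //.
  rewrite span_cat => /memv_addP [w Hw [u Hu ->]].
  by rewrite linearD /= K2 // K1 // addr0 [w + u]addrC addrK.
have piB : forall v w, w \in [:: z; e 0%N; f 0%N] -> beta (pi v) w = beta v w.
  move=> v w Hw; have [H1 H2 H3] := Uorth _ (K3 v).
  have : beta (v - pi v) w = 0.
    by move: Hw; rewrite !inE => /orP [/eqP ->|/orP [] /eqP ->].
  by rewrite bBl => /eqP; rewrite subr_eq0 => /eqP.
have UX : qf_Usp x y e f d =
    Xsp <<[:: x; y]>>%VS (fun i => e i.+1) (fun i => f i.+1) (d - 2).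
  by rewrite /qf_Usp /Xsp span_cat /qf_hyp_seq (iotaDl 1 0) -map_comp.
have boundU : forall T, (T <= qf_Usp x y e f d)%VS ->
    (forall v w, v \in T -> w \in T -> beta v w = 0) -> (\dim T <= d - 2)%N.
  move=> T TU Tts; apply: (ts_bound Hbil Hsym Hanis' (es := fun i => e i.+1) (fs := fun i => f i.+1)) => //.
  - by move=> i id; apply: Hef; (prune; lia).
  - move=> i j id jd ij; apply: pair_orth; (prune; lia).
  - by move=> a i Aa id; apply: A_orth => //; (prune; lia).
  - by rewrite -UX.
have [m0 Mm0 m0z] : exists2 m, m \in M & beta m z != 0.
  case: (boolP (has (fun b => beta b z != 0) (vbasis M))).
    by case/hasP => b bM bz; exists b => //; apply: vbasis_mem.
  move/hasPn => Hall; exfalso.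
  have Mz : forall v, v \in M -> beta v z = 0.
    move=> v; rewrite -{1}(span_basis (vbasisP M)) => Hv.
    apply: (orth_span Hbil _ Hv) => b /Hall; by case: eqP.
  have ZX : Xsp <<[:: x; y]>>%VS e f (d - 1) =
      (<<[:: x; y]>> + <<[:: e 0%N; f 0%N] ++ qf_hyp_seq e f d>>)%VS.
    by rewrite (_ : (d - 1 = (d - 2).+1)%N) //; (prune; lia).
  have : (\dim M <= d - 1)%N.
    apply: (ts_bound Hbil Hsym Hanis' (es := e) (fs := f)) => //.
    - by move=> i id; apply: Hef; (prune; lia).
    - move=> i j id jd ij; apply: pair_orth; (prune; lia).
    - by move=> a i Aa id; apply: A_orth => //; (prune; lia).
    apply/subvP => v Mv; rewrite ZX span_cat addvA [(<<[:: x; y]>> + _)%VS]addvC -addvA.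
    have -> : v = pi v + (v - pi v) by rewrite addrC subrK.
    apply: memv_add; last by have := K3 v; rewrite /qf_Usp span_cat.
    rewrite piE Mz // scale0r add0r.
    by rewrite rpredD // memvZ // memv_span // !inE eqxx ?orbT.
  rewrite Hdim; (prune; lia).
have Hez : beta (e 0%N) z = 0 by rewrite Hsym.
have Hfz : beta (f 0%N) z = 0 by rewrite Hsym.
have Hfe0 : beta (f 0%N) (e 0%N) = 1 by rewrite Hsym.
set K := (M :&: lker pi)%VS.
set P := (pi @: M)%VS.
have dKP : (\dim K + \dim P = d)%N by rewrite -Hdim limg_ker_dim.
have KP : forall v, v \in K -> v \in M /\ pi v = 0.
  by move=> v; rewrite memv_cap memv_ker => /andP [-> /eqP].
have dK : (\dim K <= d - 2)%N.
  apply: boundU.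
    apply/subvP => v /KP [_ pv]; have := K3 v; by rewrite pv subr0.
  by move=> v w /KP [Mv _] /KP [Mw _]; apply: Hts'.
have Psub : (P <= <<[:: z; e 0%N; f 0%N]>>)%VS.
  apply/subvP => w /memv_imgP [v _ ->]; rewrite piE.
  by rewrite !rpredD // memvZ // memv_span // !inE eqxx ?orbT.
have dP3 : (\dim P <= 3)%N by apply: leq_trans (dimvS Psub) (dim_span _).
have finish : forall bs, all (mem M) bs -> free (map pi bs) -> size bs = \dim P ->
  exists b u : nat -> V,
    [/\ basis_of M [seq b i | i <- iota 1 d],
        (forall i, u i \in qf_Usp x y e f d),
        (forall i, (size bs < i <= d)%N -> b i = u i)
      & (forall i, (0 < i <= size bs)%N -> b i = pi (nth 0 bs i.-1) + u i)].
  move=> bs bsM frb szb.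
  have szL : size (bs ++ vbasis K) = d by rewrite size_cat size_tuple szb addnC dKP.
  exists (fun i => nth 0 (bs ++ vbasis K) i.-1).
  exists (fun i => nth 0 (bs ++ vbasis K) i.-1 - pi (nth 0 (bs ++ vbasis K) i.-1)).
  split.
  - by rewrite -[X in iota 1 X]szL map_nth_iota1; apply: assemble.
  - by move=> i; apply: K3.
  - move=> i /andP [i1 id]; rewrite nth_cat.
    rewrite (aux3 i1).
    have : nth 0 (vbasis K) (i.-1 - size bs) \in K.
      apply: vbasis_mem; apply: mem_nth; rewrite size_tuple.
      by move: szL; rewrite size_cat size_tuple => szL; apply: aux4 szL _; rewrite i1.
    by case/KP => _ ->; rewrite subr0.
  - move=> i /andP [i1 id]; rewrite nth_cat (aux5 i1 id).
    by rewrite addrC subrK.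
have dP2 : (2 <= \dim P)%N by apply: aux6 dKP dK d2.
have duals : forall X Y : seq V, size X = size Y ->
  (forall i j, (i < size X)%N -> (j < size X)%N -> beta X`_i Y`_j = (i == j)%:R) -> free X.
  by move=> X Y; exact: (@dual_free _ _ _ Hbil X Y).
have [P3 | P2] := aux7 dP2 dP3.
  have PE : P = <<[:: z; e 0%N; f 0%N]>>%VS.
    by apply/eqP; rewrite eqEdim Psub P3 dim_span.
  have /memv_imgP [m1 Mm1 E1] : z \in P by rewrite PE memv_span // !inE eqxx.
  have /memv_imgP [m2 Mm2 E2] : e 0%N \in P by rewrite PE memv_span // !inE eqxx ?orbT.
  have /memv_imgP [m3 Mm3 E3] : f 0%N \in P by rewrite PE memv_span // !inE eqxx ?orbT.
  have [] := finish [:: m1; m2; m3].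
  - by apply/allP => v; rewrite !inE => /or3P [] /eqP ->.
  - rewrite /= -E1 -E2 -E3; apply: (duals _ [:: z; f 0%N; e 0%N]) => //.
    move=> [|[|[|i]]] [|[|[|j]]] //= _ _;
      by rewrite ?Hzz ?Hzf ?Hze ?Hez ?Hfz ?Hef0 ?Hfe0 ?Hee0 ?Hff0 ?mulr1n ?mulr0n.
  - by rewrite P3.
  move=> b [u [Hbas HU Hbig Hsmall]].
  exists b, u; split => //; split => //; apply: Or31; split.
  - exact: aux8 dKP P3.
  - by rewrite (Hsmall 1%N) //= -E1.
  - by rewrite (Hsmall 2%N) //= -E2.
  - by rewrite (Hsmall 3%N) //= -E3.
  - by move=> i /andP [i4 id]; apply: Hbig; rewrite id andbT.
pose m1 := (beta m0 z)^-1 *: m0.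
have Mm1 : m1 \in M by rewrite memvZ.
have H1z : beta m1 z = 1 by rewrite bZl mulVf.
clearbody m1.
have : ~~ (P <= <[pi m1]>)%VS.
  apply/negP => sub; have := dimvS sub; rewrite dim_vline P2.
  by case: (_ != 0).
case/subvPn => w /memv_imgP [m' Mm' ->] Hnot.
pose m2 := m' - beta m' z *: m1.
have Mm2 : m2 \in M by rewrite rpredB // memvZ.
have H2z : beta m2 z = 0 by rewrite bBl bZl H1z mulr1 subrr.
have pm2 : pi m2 \notin <[pi m1]>%VS.
  apply: contra Hnot => H.
  have -> : pi m' = pi m2 + beta m' z *: pi m1 by rewrite /m2 linearB linearZ /= subrK.
  by rewrite rpredD // memvZ // memv_line.
have pm2E : pi m2 = beta m2 (f 0%N) *: e 0%N + beta m2 (e 0%N) *: f 0%N.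
  by rewrite piE H2z scale0r add0r.
have inz : z \in [:: z; e 0%N; f 0%N] by rewrite !inE eqxx.
have ine : e 0%N \in [:: z; e 0%N; f 0%N] by rewrite !inE eqxx ?orbT.
have inf : f 0%N \in [:: z; e 0%N; f 0%N] by rewrite !inE eqxx ?orbT.
case: (eqVneq (beta m2 (f 0%N)) 0) => [r0 | rn0].
  have sn0 : beta m2 (e 0%N) != 0.
    apply: contra pm2 => /eqP s0.
    by rewrite pm2E r0 s0 !scale0r addr0 mem0v.
  pose b2 := (beta m2 (e 0%N))^-1 *: m2.
  pose b1 := m1 - beta m1 (e 0%N) *: b2.
  have Hb2z : beta b2 z = 0 by rewrite /b2 bZl H2z mulr0.
  have Hb2f : beta b2 (f 0%N) = 0 by rewrite /b2 bZl r0 mulr0.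
  have Hb2e : beta b2 (e 0%N) = 1 by rewrite /b2 bZl mulVf.
  have Mb2 : b2 \in M by rewrite memvZ.
  clearbody b2.
  have Hb1z : beta b1 z = 1 by rewrite /b1 bBl bZl Hb2z mulr0 subr0.
  have Hb1e : beta b1 (e 0%N) = 0 by rewrite /b1 bBl bZl Hb2e mulr1 subrr.
  have [] := finish [:: b1; b2].
  - apply/allP => v; rewrite !inE => /orP [] /eqP ->.
      by rewrite /b1 rpredB // memvZ.
    by [].
  - apply: (duals _ [:: z; e 0%N]) => //.
    move=> [|[|i]] [|[|j]] //= _ _; rewrite piB //;
      by rewrite ?Hb1z ?Hb1e ?Hb2z ?Hb2e ?mulr1n ?mulr0n.
  - by rewrite P2.
  move=> b [u [Hbas HU Hbig Hsmall]].
  exists b, u; split => //; split => //; apply: Or33; exists (beta b1 (f 0%N)); split.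
  - by rewrite (Hsmall 1%N) //= piE Hb1z Hb1e scale1r scale0r addr0.
  - by rewrite (Hsmall 2%N) //= piE Hb2z Hb2f Hb2e !scale0r scale1r !add0r.
  - by move=> i /andP [i3 id]; apply: Hbig; rewrite id andbT.
pose b2 := (beta m2 (f 0%N))^-1 *: m2.
pose b1 := m1 - beta m1 (f 0%N) *: b2.
have Hb2z : beta b2 z = 0 by rewrite /b2 bZl H2z mulr0.
have Hb2f : beta b2 (f 0%N) = 1 by rewrite /b2 bZl mulVf.
have Mb2 : b2 \in M by rewrite memvZ.
clearbody b2.
have Hb1z : beta b1 z = 1 by rewrite /b1 bBl bZl Hb2z mulr0 subr0.
have Hb1f : beta b1 (f 0%N) = 0 by rewrite /b1 bBl bZl Hb2f mulr1 subrr.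
have [] := finish [:: b1; b2].
- apply/allP => v; rewrite !inE => /orP [] /eqP ->.
    by rewrite /b1 rpredB // memvZ.
  by [].
- apply: (duals _ [:: z; f 0%N]) => //.
  move=> [|[|i]] [|[|j]] //= _ _; rewrite piB //;
    by rewrite ?Hb1z ?Hb1f ?Hb2z ?Hb2f ?mulr1n ?mulr0n.
- by rewrite P2.
move=> b [u [Hbas HU Hbig Hsmall]].
exists b, u; split => //; split => //; apply: Or32.
exists (beta b1 (e 0%N)), (beta b2 (e 0%N)); split.
- by rewrite (Hsmall 1%N) //= piE Hb1z Hb1f scale1r scale0r addr0.
- by rewrite (Hsmall 2%N) //= piE Hb2z Hb2f scale0r add0r scale1r.
- by move=> i /andP [i3 id]; apply: Hbig; rewrite id andbT.
Qed.
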